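(* Let $\mathcal{H}$ be a complex Hilbert space of finite dimension $n\ge 2$, $m\ge 2$, and $\rho$ a density operator on $\mathcal{H}^{\otimes m}$ in reduced state consensus (RSC) such that each reduced state $\bar\rho_k$ is a pure state (rank one). Then $\rho$ is in symmetric state consensus (SSC).
   Context: The reduced states are $\bar\rho_k=\mathrm{Tr}_{\bigotimes_{j\neq k}\mathcal{H}_j}(\rho)$ (partial trace over all tensor factors except the $k$-th). $\rho$ is RSC if $\bar\rho_1=\cdots=\bar\rho_m$. For a permutation $\pi$ of $\{1,\dots,m\}$, $U_\pi$ is the unitary on $\mathcal{H}^{\otimes m}$ with $U_\pi(X_1\otimes\cdots\otimes X_m)U_\pi^\dagger=X_{\pi(1)}\otimes\cdots\otimes X_{\pi(m)}$; $\rho$ is SSC if $U_\pi\rho U_\pi^\dagger=\rho$ for all permutations $\pi$. *)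

(* Defs.v *)
From HB Require Import structures.
From mathcomp Require Import all_boot all_order all_algebra all_fingroup.
Set Implicit Arguments. Unset Strict Implicit. Unset Printing Implicit Defensive.
Import Order.TTheory GRing.Theory Num.Theory.
Local Open Scope ring_scope.

(* Scalars: an arbitrary numeric algebraically closed field C (e.g. the
   complex numbers), with conjugation  z^*.  H = C^n with standard basis
   indexed by 'I_n; H^{(x) m} has the product basis indexed by
   m-tuples  x : {ffun 'I_m -> 'I_n}  (e_x = e_{x 0} (x) ... (x) e_{x (m-1)}).
   Operators on H^{(x) m} are given by their matrices in this basis. *)

Definition idx (n m : nat) : finType := {ffun 'I_m -> 'I_n}.
Definition op (C : numClosedFieldType) (n m : nat) := idx n m -> idx n m -> C.

Section Ops.
Variables (C : numClosedFieldType) (n m : nat).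
Local Notation K := (idx n m).

Definition opmul (A B : op C n m) : op C n m :=
  fun x y => \sum_(z : K) A x z * B z y.

Definition adjoint (A : op C n m) : op C n m := fun x y => (A y x)^*.

Definition optrace (A : op C n m) : C := \sum_(x : K) A x x.

Definition density (rho : op C n m) : Prop :=
  [/\ forall x y, rho y x = (rho x y)^*,
      forall v : K -> C, 0 <= \sum_(x : K) \sum_(y : K) (v x)^* * rho x y * v y
    & optrace rho = 1].

Definition upd (x : K) (k : 'I_m) (b : 'I_n) : K :=
  [ffun j => if j == k then b else x j].

(* reduced state: partial trace over all factors except the k-th *)
Definition reduced (rho : op C n m) (k : 'I_m) : 'M[C]_n :=
  \matrix_(a, b) \sum_(x : K | x k == a) rho x (upd x k b).

Definition RSC (rho : op C n m) : Prop :=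
  forall k l : 'I_m, reduced rho k = reduced rho l.

(* U_pi: U_pi e_y = e_{y o pi}, i.e. U_pi (v_1 (x) ... (x) v_m)
   = v_{pi 1} (x) ... (x) v_{pi m}; hence
   U_pi (X_1 (x) ... (x) X_m) U_pi^dagger = X_{pi 1} (x) ... (x) X_{pi m}. *)
Definition Uperm (pi : {perm 'I_m}) : op C n m :=
  fun x y => (x == [ffun j => y (pi j)])%:R.

Definition SSC (rho : op C n m) : Prop :=
  forall pi : {perm 'I_m},
    opmul (opmul (Uperm pi) rho) (adjoint (Uperm pi)) = rho.

End Ops.

(* Main.v *)
Require Import Defs.
From mathcomp Require Import all_boot all_order all_algebra all_fingroup.
From mathcomp Require Import ring.
Set Implicit Arguments. Unset Strict Implicit. Unset Printing Implicit Defensive.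
Import Order.TTheory GRing.Theory Num.Theory.
Local Open Scope ring_scope.

Section Upd.
Variables (n m : nat).
Local Notation K := (idx n m).

Lemma updE (x : K) k b j : upd x k b j = if j == k then b else x j.
Proof. by rewrite /upd ffunE. Qed.

Lemma upd_at (x : K) k b : upd x k b k = b.
Proof. by rewrite updE eqxx. Qed.

Lemma upd_upd (x : K) k a b : upd (upd x k a) k b = upd x k b.
Proof. by apply/ffunP=> j; rewrite !updE; case: (j == k). Qed.

Lemma upd_id (x : K) k : upd x k (x k) = x.
Proof. by apply/ffunP=> j; rewrite updE; case: eqP => // ->. Qed.

Lemma upd_idE (x : K) k b : x k = b -> upd x k b = x.
Proof. by move=> <-; apply: upd_id. Qed.

Variable (R : nmodType).

Lemma sum_slice (F : K -> R) k a b :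
  \sum_(x : K | x k == a) F x = \sum_(x : K | x k == b) F (upd x k a).
Proof.
rewrite (reindex_onto (fun x => upd x k a) (fun x => upd x k b)).
  apply: eq_bigl => x; rewrite upd_at eqxx /= upd_upd.
  apply/eqP/eqP => [<-|H]; first by rewrite upd_at.
  by apply: upd_idE.
by move=> x /eqP <-; rewrite upd_upd upd_id.
Qed.

Lemma sum_fiber (F : K -> R) k :
  \sum_x F x = \sum_a \sum_(x : K | x k == a) F x.
Proof. by rewrite (partition_big (fun x : K => x k) xpredT). Qed.

Lemma sum_ind (G : K -> R) k (y : K) :
  \sum_(z : K) (if upd z k (y k) == y then G z else 0) = \sum_a G (upd y k a).
Proof.
rewrite (sum_fiber _ k); apply: eq_bigr => a _.
rewrite (sum_slice _ _ _ (y k)).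
rewrite (bigD1 y) //= upd_upd upd_id eqxx big1 ?addr0 //.
by move=> x /andP [/eqP H /negbTE]; rewrite upd_upd upd_idE // => ->.
Qed.

Lemma sum_upd (G : K -> R) k b (P : pred K) :
  \sum_(z : K | P z && (z k == b)) \sum_a G (upd z k a)
  = \sum_(z : K | P (upd z k b)) G z.
Proof.
rewrite exchange_big /= [RHS]big_mkcond [RHS](sum_fiber _ k).
apply: eq_bigr => a _.
rewrite (sum_slice _ _ _ b) [LHS]big_mkcond [RHS]big_mkcond.
apply: eq_bigr => x _ /=.
rewrite upd_upd; case: (x k =P b) => [H|]; last by rewrite andbF.
by rewrite andbT (upd_idE H).
Qed.

End Upd.
Section Kern.
Variables (C : numClosedFieldType) (n m : nat) (rho : op C n m).
Local Notation K := (idx n m).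

Definition qf (v : K -> C) := \sum_(x : K) \sum_(y : K) (v x)^* * rho x y * v y.

Lemma sum_delta (F : K -> C) x0 : \sum_(y : K) (y == x0)%:R * F y = F x0.
Proof.
rewrite (bigD1 x0) //= eqxx mul1r big1 ?addr0 // => y /negbTE ->.
by rewrite mul0r.
Qed.

Hypothesis hH : forall x y, rho y x = (rho x y)^*.

Lemma qf_add (v : K -> C) (t : C) x0 :
  qf (fun x => v x + t * (x == x0)%:R) =
  qf v + t * (\sum_y rho x0 y * v y)^* + t^* * (\sum_y rho x0 y * v y)
  + t^* * t * rho x0 x0.
Proof.
rewrite /qf.
have E : forall x y, (v x + t * (x == x0)%:R)^* * rho x y * (v y + t * (y == x0)%:R)
   = (v x)^* * rho x y * v y + (y == x0)%:R * ((v x)^* * rho x y * t)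
     + (x == x0)%:R * (t^* * (rho x y * v y))
     + (x == x0)%:R * ((y == x0)%:R * (t^* * rho x y * t)).
  by move=> x y; rewrite rmorphD rmorphM rmorph_nat; ring.
under eq_bigr do under eq_bigr do rewrite E.
under eq_bigr do rewrite !big_split /= sum_delta.
rewrite !big_split /=.
congr (_ + _ + _ + _).
- rewrite rmorph_sum mulr_sumr; apply: eq_bigr => x _.
  by rewrite rmorphM (hH x0 x); ring.
- under eq_bigr do rewrite -mulr_sumr.
  by rewrite sum_delta -mulr_sumr.
- under eq_bigr do rewrite -mulr_sumr sum_delta.
  by rewrite sum_delta; ring.
Qed.

Hypothesis hP : forall v : K -> C, 0 <= qf v.

Lemma kernel (v : K -> C) : qf v = 0 -> forall x0, \sum_y rho x0 y * v y = 0.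
Proof.
move=> hv x0.
set a := \sum_y rho x0 y * v y; set b := rho x0 x0.
have hb : 0 <= b.
  have := hP (fun x => (fun=> 0) x + 1 * (x == x0)%:R).
  rewrite (qf_add (fun=> 0) 1 x0).
  have -> : qf (fun=> 0) = 0 by rewrite /qf big1 // => x _; rewrite big1 // => y _; rewrite rmorph0; ring.
  rewrite (_ : \sum_y rho x0 y * 0 = 0); last by rewrite big1 // => y _; rewrite mulr0.
  by rewrite rmorph0 conjC1 !mulr0 !add0r !mul1r.
have hb1 : 0 < b + 1 by rewrite ltr_wpDl.
pose s := (b + 1)^-1.
have hs : s^* = s by apply: geC0_conj; rewrite invr_ge0 ltW.
have := hP (fun x => v x + (- (a * s)) * (x == x0)%:R).
rewrite qf_add hv -/a.
have -> : 0 + - (a * s) * a^* + (- (a * s))^* * a + (- (a * s))^* * - (a * s) * b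
   = - (s * s * (a * a^*) * (b + 2)).
  rewrite rmorphN rmorphM /= hs /s; field.
  by rewrite gt_eqF.
rewrite oppr_ge0 => Hle.
have Hge : 0 <= s * s * (a * a^*) * (b + 2).
  have s0 : 0 <= s by rewrite /s invr_ge0 ltW.
  by rewrite mulr_ge0 ?addr_ge0 // mulr_ge0 ?mul_conjC_ge0 // mulr_ge0.
have /eqP : s * s * (a * a^*) * (b + 2) = 0 by apply/le_anti; rewrite Hle Hge.
have sn : (s == 0) = false by rewrite /s invr_eq0 gt_eqF.
have b2 : (b + 2 == 0) = false by rewrite gt_eqF // ltr_wpDl.
rewrite !mulf_eq0 sn b2 conjC_eq0 orbb /= orbb orbF.
by move/eqP.
Qed.

End Kern.
Section Main.
Variables (C : numClosedFieldType) (n m : nat) (rho : op C n m).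
Local Notation K := (idx n m).
Hypothesis hH : forall x y, rho y x = (rho x y)^*.
Hypothesis hP : forall v : K -> C, 0 <= qf rho v.
Hypothesis htr : optrace rho = 1.

Lemma trace_reduced k : \sum_a reduced rho k a a = 1.
Proof.
rewrite -htr /optrace (sum_fiber _ k); apply: eq_bigr => a _.
rewrite mxE; apply: eq_bigr => x /eqP <-; by rewrite upd_id.
Qed.

Section Fixk.
Variable (k : 'I_m).
Variables (u' : 'I_n -> C) (y0 : K).
Local Notation M := (reduced rho k).

Definition wv (y : K) (z : K) := if upd z k (y k) == y then u' (z k) else 0.

Lemma qf_block y :
  qf rho (wv y) = \sum_a \sum_b (u' a)^* * rho (upd y k a) (upd y k b) * u' b.
Proof.
rewrite /qf /wv.
rewrite (eq_bigr (fun x => if upd x k (y k) == y then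
     \sum_z (if upd z k (y k) == y then (u' (x k))^* * rho x z * u' (z k) else 0) else 0)); last first.
  move=> x _; case: ifP => _; last by rewrite big1 // => z _; rewrite rmorph0 !mul0r.
  by apply: eq_bigr => z _; case: ifP => _; rewrite ?mulr0.
rewrite sum_ind; apply: eq_bigr => a _.
by rewrite sum_ind upd_at; apply: eq_bigr => b _; rewrite upd_at.
Qed.

Hypothesis hu' : forall a, \sum_c M a c * u' c = 0.

Lemma qf_block0 y : qf rho (wv y) = 0.
Proof.
have E : \sum_(z : K | z k == y k) qf rho (wv z) = 0.
  rewrite (eq_bigr (fun z => \sum_a \sum_b (u' a)^* * rho (upd z k a) (upd z k b) * u' b));
    last by move=> z _; rewrite qf_block.
  rewrite exchange_big /=.
  rewrite (eq_bigr (fun a => (u' a)^* * \sum_b M a b * u' b)); last first.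
    move=> a _; rewrite exchange_big mulr_sumr; apply: eq_bigr => b _ /=.
    rewrite mxE [X in _ = _ * (X * _)](sum_slice _ _ _ (y k)) mulr_suml mulr_sumr; apply: eq_bigr => z _.
    by rewrite upd_upd mulrA.
  by rewrite big1 // => a _; rewrite hu' mulr0.
by apply: (psumr_eq0P _ E) => // z _.
Qed.

Lemma kernel_block y x : \sum_a rho x (upd y k a) * u' a = 0.
Proof.
have := kernel hH hP (qf_block0 y) x.
rewrite /wv (eq_bigr (fun z => if upd z k (y k) == y then rho x z * u' (z k) else 0)).
  by rewrite sum_ind; under eq_bigr do rewrite upd_at.
by move=> z _; case: ifP; rewrite ?mulr0.
Qed.

End Fixk.

Lemma factor (hn : (0 < n)%N) (hm : (0 < m)%N) :
  (forall k l, reduced rho k = reduced rho l) ->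
  (forall k, \rank (reduced rho k) = 1%N) ->
  exists u v : 'I_n -> C, forall k a b, reduced rho k a b = u a * v b.
Proof.
move=> hR hr; pose i0 : 'I_n := Ordinal hn; pose k0 : 'I_m := Ordinal hm.
set M := reduced rho k0.
exists (fun a => col_ebase M a i0), (fun b => row_ebase M i0 b) => k a b.
have E : col_ebase M *m pid_mx 1 *m row_ebase M = M by rewrite -(hr k0) mulmx_ebase.
rewrite (hR k k0) -/M; rewrite -[in LHS]E !mxE.
rewrite (bigD1 i0) //= big1 ?addr0; last first.
  move=> j /negbTE Hj; rewrite !mxE big1 ?mul0r // => i _; rewrite !mxE.
  case: (i =P j :> nat) => [Hij|]; last by rewrite mulr0.
  have -> : (i < 1)%N = false.
    apply/negbTE; rewrite -leqNgt lt0n Hij; apply/negP => /eqP Hj0.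
    by move: Hj; rewrite (_ : j = i0) ?eqxx //; apply: val_inj.
  by rewrite mulr0.
rewrite !mxE (bigD1 i0) //= big1 ?addr0; last first.
  move=> i /negbTE Hi; rewrite !mxE.
  have -> : (i == i0 :> nat) = false by exact: Hi.
  by rewrite mulr0.
by rewrite !mxE eqxx /= mulr1.
Qed.

Section Fact.
Variables (u v : 'I_n -> C).
Hypothesis hf : forall k a b, reduced rho k a b = u a * v b.

Hypothesis hm0 : (0 < m)%N.

Lemma vu1 : \sum_a v a * u a = 1.
Proof.
rewrite -(trace_reduced (Ordinal hm0)); apply: eq_bigr => a _.
by rewrite hf mulrC.
Qed.

Lemma sum_delta1 (F : 'I_n -> C) b : \sum_a F a * (a == b)%:R = F b.
Proof.
rewrite (bigD1 b) //= eqxx mulr1 big1 ?addr0 // => a /negbTE ->.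
by rewrite mulr0.
Qed.

Lemma Eqk k x y : rho x y = \sum_a rho x (upd y k a) * u a * v (y k).
Proof.
pose u' c := (c == y k)%:R - reduced rho k c (y k).
have hu' : forall a, \sum_c reduced rho k a c * u' c = 0.
  move=> a; rewrite /u'.
  under eq_bigr do rewrite mulrBr.
  rewrite sumrB sum_delta1.
  under eq_bigr do rewrite !hf.
  rewrite hf.
  rewrite (eq_bigr (fun c => u a * (v c * u c) * v (y k))); last by move=> c _; ring.
  by rewrite -mulr_suml -mulr_sumr vu1 mulr1 subrr.
have := kernel_block hu' y x.
rewrite /u'; under eq_bigr do rewrite mulrBr.
rewrite sumrB sum_delta1 upd_id => /eqP; rewrite subr_eq0 => /eqP ->.
by apply: eq_bigr => a _; rewrite hf mulrA.
Qed.

Definition Aj (j : nat) (y z : K) := [forall i : 'I_m, (j <= i)%N ==> (z i == y i)].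
Definition Pj (j : nat) (y z : K) := \prod_(i : 'I_m | (i < j)%N) (u (z i) * v (y i)).

Lemma induct j x y : (j <= m)%N -> rho x y = \sum_(z : K | Aj j y z) rho x z * Pj j y z.
Proof.
elim: j => [_|j IH hj].
  rewrite (big_pred1 y).
    by rewrite /Pj big_pred0 ?mulr1.
  move=> z /=; rewrite /Aj; apply/forallP/eqP => [H|->].
    by apply/ffunP=> i; apply/eqP; exact: (implyP (H i)).
  by move=> i; rewrite eqxx implybT.
have hk : (j < m)%N := hj.
pose k := Ordinal hk.
rewrite IH; last exact: ltnW.
have hA : forall z, Aj j y z = Aj j.+1 y z && (z k == y k).
  move=> z; apply/forallP/andP => [H|[/forallP H1 /eqP H2] i].
    split; first by apply/forallP => i; apply/implyP => hi; exact: (implyP (H i)) (ltnW hi).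
    exact: (implyP (H k)) (leqnn j).
  apply/implyP; rewrite leq_eqVlt => /orP [/eqP hi|hi].
    have -> : i = k by apply: val_inj.
    by rewrite H2.
  exact: (implyP (H1 i)) hi.
have hA' : forall z, Aj j.+1 y (upd z k (y k)) = Aj j.+1 y z.
  move=> z; apply: eq_forallb => i; rewrite updE; case: (i =P k) => [->|] //=.
  by rewrite ltnn.
rewrite (eq_bigl _ _ hA).
rewrite [RHS](eq_bigl (fun z => Aj j.+1 y (upd z k (y k)))); last by move=> z; rewrite hA'.
rewrite -sum_upd; apply: eq_bigr => z /andP [_ /eqP hz].
rewrite (Eqk k x z) hz mulr_suml; apply: eq_bigr => a _.
rewrite /Pj [in RHS](bigD1 k) //= upd_at -!mulrA; congr (_ * (_ * (_ * _))).
apply: eq_big => i.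
  rewrite ltnS; case: (i =P k) => [->|hik] /=; first by rewrite ltnn andbF.
  have hij : (i : nat) != j by apply/eqP => h; apply: hik; apply: val_inj.
  by rewrite andbT ltn_neqAle hij.
move=> hi; rewrite updE.
case: (i =P k) => // hik.
by move: hi; rewrite hik /= ltnn.
Qed.

Lemma prod_form x y :
  rho x y = (\sum_(z : K) rho x z * \prod_i u (z i)) * \prod_i v (y i).
Proof.
rewrite (induct x y (leqnn m)) mulr_suml.
have hAm : forall z, Aj m y z = true.
  by move=> z; apply/forallP => i; apply/implyP; rewrite leqNgt ltn_ord.
rewrite (eq_bigl _ _ hAm).
have hlt : forall i : 'I_m, (i < m)%N = true by move=> i; exact: ltn_ord.
by apply: eq_bigr => z _; rewrite /Pj (eq_bigl _ _ hlt) big_split mulrA.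
Qed.

Lemma herm_form : exists d, forall x y,
  rho x y = d * (\prod_i v (x i))^* * \prod_i v (y i).
Proof.
exists (\sum_(z : K) (\sum_(w : K) rho z w * \prod_i u (w i))^* * \prod_i u (z i)).
move=> x y; rewrite prod_form; congr (_ * _).
rewrite mulrC mulr_sumr; apply: eq_bigr => z _.
by rewrite (hH z x) prod_form rmorphM; ring.
Qed.

End Fact.
End Main.
From Stdlib Require Import FunctionalExtensionality.

Lemma perm_eq_ffun (n m : nat) (pi : {perm 'I_m}) (x w : idx n m) :
  (x == [ffun j => w (pi j)]) = (w == [ffun j => x ((pi^-1)%g j)]).
Proof.
apply/eqP/eqP => ->; apply/ffunP => j; rewrite !ffunE.
  by rewrite permKV.
by rewrite permK.
Qed.

Lemma prod_perm (C : numClosedFieldType) (n m : nat) (pi : {perm 'I_m}) (v : 'I_n -> C) (x : idx n m) :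
  \prod_i v ([ffun j => x ((pi^-1)%g j)] i) = \prod_i v (x i).
Proof.
rewrite [RHS](reindex_inj (@perm_inj _ (pi^-1)%g)); apply: eq_bigr => i _.
by rewrite ffunE.
Qed.

Theorem proposition3 (C : numClosedFieldType) (n m : nat)
  (hn : (2 <= n)%N) (hm : (2 <= m)%N) (rho : op C n m) :
  density rho -> RSC rho ->
  (forall k : 'I_m, \rank (reduced rho k) = 1%N) ->
  SSC rho.
Proof.
move=> [hH hP htr] hR hr.
have hn0 : (0 < n)%N by apply: leq_trans hn.
have hm0 : (0 < m)%N by apply: leq_trans hm.
have [u [v hf]] := factor hn0 hm0 hR hr.
have [d hd] := herm_form hH hP htr hf hm0.
move=> pi.
apply: functional_extensionality => x; apply: functional_extensionality => y.
rewrite /opmul /adjoint /Uperm.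
under eq_bigr do under eq_bigr do rewrite perm_eq_ffun.
under eq_bigr do rewrite sum_delta perm_eq_ffun conjC_nat mulrC.
by rewrite sum_delta !hd !prod_perm.
Qed.
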